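(* For every $n$ there exists a binary integer program $\mathcal{I}^*$ with $2n$ binary variables such that: (i) every branch-and-bound tree $\mathcal{T}(\mathcal{I}^* )$ solving $\mathcal{I}^*$ which has the property that, at every internal node $N$ with returned LP optimal solution $x$, the branching variable $j$ satisfies $x_j\in(0,1)$, has $|\mathcal{T}(\mathcal{I}^* )|\ge 2^{n+1}-1$; in particular every branch-and-bound tree $\mathcal{T}_S(\mathcal{I}^* )$ generated by strong-branching that solves $\mathcal{I}^*$ has $|\mathcal{T}_S(\mathcal{I}^* )|\ge 2^{n+1}-1$; and (ii) there exists a branch-and-bound tree $\mathcal{T}^*$ solving $\mathcal{I}^*$ with $|\mathcal{T}^*(\mathcal{I}^* )|\le 4n+1$.
   Context: A branch-and-bound tree for a binary program over a polytope is a rooted binary tree in which each node corresponds to the polytope intersected with constraints fixing some variables to $0$ or $1$ (those fixed on the path from the root); at each node the LP solver returns an optimal extreme point of the node LP; each internal node branches on one binary variable $z$, its children adding $z=0$ and $z=1$. The tree solves the instance if at every leaf the LP is infeasible, or its returned optimal solution is integral, or its value is no better than the best integral solution found. $|\mathcal{T}|$ is the number of nodes. Strong branching only branches on variables fractional in the returned LP solution (choosing among them by maximizing a score of the children's LP bound changes). *)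

(* Defs.v *)
From HB Require Import structures.
From mathcomp Require Import all_boot all_order all_algebra.
Set Implicit Arguments. Unset Strict Implicit. Unset Printing Implicit Defensive.
Import Order.TTheory GRing.Theory Num.Theory.
Local Open Scope ring_scope.

(* A binary integer program  max c^T x  s.t.  A x <= b,  x in {0,1}^d.
   Its LP relaxation is  max c^T x  s.t.  A x <= b, 0 <= x <= 1.
   Points are column vectors 'cV[R]_d. *)

Section BB.
Variables (R : realFieldType) (d m : nat).
Variables (A : 'M[R]_(m, d)) (b : 'cV[R]_m) (c : 'cV[R]_d).

Definition objval (x : 'cV[R]_d) : R := \sum_(i < d) c i 0 * x i 0.

(* a fixing of variables: None = free, Some s = fixed to s (false=0, true=1) *)
Definition fixing (d : nat) := 'I_d -> option bool.
Definition root_fixing : fixing d := fun _ => None.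
Definition fix_var (f : fixing d) (j : 'I_d) (s : bool) : fixing d :=
  fun i => if i == j then Some s else f i.

Definition node_feas (f : fixing d) (x : 'cV[R]_d) : Prop :=
  (forall i, (A *m x) i 0 <= b i 0) /\
  (forall j, 0 <= x j 0 <= 1) /\
  (forall j s, f j = Some s -> x j 0 = (s : nat)%:R).

Definition extreme_point (S : 'cV[R]_d -> Prop) (x : 'cV[R]_d) : Prop :=
  S x /\ forall (y z : 'cV[R]_d) (t : R), S y -> S z -> 0 < t < 1 ->
    x = t *: y + (1 - t) *: z -> y = z.

Definition lp_opt_extreme (f : fixing d) (x : 'cV[R]_d) : Prop :=
  extreme_point (node_feas f) x /\
  forall y, node_feas f y -> objval y <= objval x.

Definition lp_infeasible (f : fixing d) : Prop := forall x, ~ node_feas f x.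

Definition lp_value (f : fixing d) (v : option R) : Prop :=
  match v with
  | None => lp_infeasible f
  | Some z => exists x, node_feas f x /\ objval x = z /\
                        forall y, node_feas f y -> objval y <= z
  end.

Definition integral (x : 'cV[R]_d) : Prop := forall j, x j 0 = 0 \/ x j 0 = 1.

Definition fractional_at (x : 'cV[R]_d) (j : 'I_d) : Prop := 0 < x j 0 < 1.

End BB.

(* A branch-and-bound tree: each node records the LP solution returned by the
   solver (a leaf may record None = infeasible LP); an internal node records
   its branching variable j and children for  x_j = 0  and  x_j = 1. *)
Inductive bbtree (R : realFieldType) (d : nat) : Type :=
| BLeaf : option 'cV[R]_d -> bbtree R d
| BNode : 'cV[R]_d -> 'I_d -> bbtree R d -> bbtree R d -> bbtree R d.
Arguments BLeaf {R d}.
Arguments BNode {R d}.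

Section Trees.
Variables (R : realFieldType) (d m : nat).
Variables (A : 'M[R]_(m, d)) (b : 'cV[R]_m) (c : 'cV[R]_d).

Fixpoint tree_size (t : bbtree R d) : nat :=
  match t with
  | BLeaf _ => 1
  | BNode _ _ t0 t1 => (tree_size t0 + tree_size t1).+1
  end.

Fixpoint tree_sols (t : bbtree R d) : seq 'cV[R]_d :=
  match t with
  | BLeaf None => [::]
  | BLeaf (Some x) => [:: x]
  | BNode x _ t0 t1 => x :: tree_sols t0 ++ tree_sols t1
  end.

Fixpoint valid_tree (f : fixing d) (t : bbtree R d) : Prop :=
  match t with
  | BLeaf None => lp_infeasible A b f
  | BLeaf (Some x) => lp_opt_extreme A b c f x
  | BNode x j t0 t1 =>
      lp_opt_extreme A b c f x /\
      valid_tree (fix_var f j false) t0 /\ valid_tree (fix_var f j true) t1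
  end.

Fixpoint leaf_sols (t : bbtree R d) : seq (option 'cV[R]_d) :=
  match t with
  | BLeaf o => [:: o]
  | BNode _ _ t0 t1 => leaf_sols t0 ++ leaf_sols t1
  end.

Definition solves (t : bbtree R d) : Prop :=
  valid_tree (@root_fixing d) t /\
  forall x, Some x \in leaf_sols t ->
    integral x \/
    exists2 y, y \in tree_sols t & integral y /\ objval c x <= objval c y.

Fixpoint fractional_branching (t : bbtree R d) : Prop :=
  match t with
  | BLeaf _ => True
  | BNode x j t0 t1 =>
      fractional_at x j /\ fractional_branching t0 /\ fractional_branching t1
  end.

Fixpoint strong_branching (score : R -> option R -> option R -> R)
    (f : fixing d) (t : bbtree R d) : Prop :=
  match t with
  | BLeaf _ => True
  | BNode x j t0 t1 =>
      fractional_at x j /\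
      (exists vj0 vj1,
         lp_value A b c (fix_var f j false) vj0 /\
         lp_value A b c (fix_var f j true) vj1 /\
         forall k vk0 vk1, fractional_at x k ->
           lp_value A b c (fix_var f k false) vk0 ->
           lp_value A b c (fix_var f k true) vk1 ->
           score (objval c x) vk0 vk1 <= score (objval c x) vj0 vj1) /\
      strong_branching score (fix_var f j false) t0 /\
      strong_branching score (fix_var f j true) t1
  end.

End Trees.

(* Main.v *)
Require Import Defs.
From mathcomp Require Import all_boot all_order all_algebra.
From mathcomp Require Import ring lra zify.
From Stdlib Require Import FunctionalExtensionality.
Import Order.TTheory GRing.Theory Num.Theory.
Local Open Scope ring_scope.
Set Implicit Arguments. Unset Strict Implicit.

Section S.
Variables (R : realFieldType) (n : nat).
Local Notation N := (n.*2).
Local Notation M := (n.*2).+1.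

Definition Am : 'M[R]_(M, N) := \matrix_(r < M, j < N)
  (if (r < n)%N then ((j == r :> nat)%:R - (nat_of_ord j == (n + r)%N)%:R / 2)
   else if (r < n + n)%N then (- (nat_of_ord j == (r - n)%N)%:R - (j == r :> nat)%:R / 2)
   else (n <= j)%N%:R).
Definition bm : 'cV[R]_M := \col_(r < M)
  (if (r < n)%N then 2^-1 else if (r < n + n)%N then - 2^-1 else n%:R - 1).
Definition cm : 'cV[R]_N := \col_(j < N) (- (n <= j)%N%:R).

Definition zv (z : 'cV[R]_N) (k : nat) := \sum_(j < N) (j == k :> nat)%:R * z j 0.
Definition Sy (z : 'cV[R]_N) := \sum_(j < N) (n <= j)%N%:R * z j 0.

Lemma zvE z (o : 'I_N) : zv z o = z o 0.
Proof.
rewrite /zv (bigD1 o) //= eqxx mul1r big1 ?addr0 // => k /negPf Hk.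
by rewrite (_ : (k == o :> nat) = false) ?mul0r // -Hk.
Qed.

Lemma rowE z (r : 'I_M) : (Am *m z) r 0 =
  if (r < n)%N then zv z r - zv z (n + r)%N / 2
  else if (r < n + n)%N then - zv z (r - n)%N - zv z r / 2 else Sy z.
Proof.
rewrite mxE /zv /Sy.
under eq_bigr do rewrite mxE.
case: (r < n)%N.
  rewrite mulr_suml -sumrB; apply: eq_bigr => j _; ring.
case: (r < n + n)%N.
  rewrite mulr_suml -sumrN -sumrB; apply: eq_bigr => j _; ring.
by [].
Qed.

Lemma objE z : objval cm z = - Sy z.
Proof.
rewrite /objval /Sy -sumrN; apply: eq_bigr => j _; rewrite mxE; ring.
Qed.

Definition pk (k : 'I_N) : 'I_N := Ordinal (leq_ltn_trans (leq_subr n k) (ltn_ord k)).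

Lemma feas_block f z (a b : 'I_N) : (b : nat) = (n + a)%N -> node_feas Am bm f z ->
  z a 0 - z b 0 / 2 <= 2^-1 /\ - z a 0 - z b 0 / 2 <= - 2^-1.
Proof.
move=> hb [hA _].
have hbN := ltn_ord b.
have ha : (a < n)%N by lia.
have r1 : (nat_of_ord a < M)%N by lia.
have r2 : (nat_of_ord b < M)%N by lia.
have h1 := hA (Ordinal r1). have h2 := hA (Ordinal r2).
rewrite rowE !mxE /= ha in h1.
rewrite zvE -hb zvE in h1.
have hb1 : (b < n)%N = false by lia.
have hb2 : (b < n + n)%N = true by lia.
have hb3 : (b - n)%N = a by lia.
rewrite rowE !mxE /= hb1 hb2 hb3 !zvE in h2.
by split.
Qed.

Lemma feas_of (f : fixing N) (p : 'cV[R]_N) :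
  (forall a b : 'I_N, (b : nat) = (n + a)%N ->
     p a 0 - p b 0 / 2 <= 2^-1 /\ - p a 0 - p b 0 / 2 <= - 2^-1) ->
  Sy p <= n%:R - 1 -> (forall j, 0 <= p j 0 <= 1) ->
  (forall j s, f j = Some s -> p j 0 = (s:nat)%:R) -> node_feas Am bm f p.
Proof.
move=> hB hS h01 hf; split => // r.
have hr := ltn_ord r.
rewrite rowE mxE.
case: ltnP => h1.
  have ra : (nat_of_ord r < N)%N by lia.
  have rb : (n + r < N)%N by lia.
  have := zvE p (Ordinal ra); rewrite /= => ->.
  have := zvE p (Ordinal rb); rewrite /= => ->.
  by have [] := hB (Ordinal ra) (Ordinal rb) erefl.
case: ltnP => h2 //.
have ra : (r - n < N)%N by lia.
have rb : (nat_of_ord r < N)%N by lia.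
have := zvE p (Ordinal ra); rewrite /= => ->.
have := zvE p (Ordinal rb); rewrite /= => ->.
have [] // := hB (Ordinal ra) (Ordinal rb).
rewrite /=; lia.
Qed.

Lemma feas_S f z : node_feas Am bm f z -> Sy z <= n%:R - 1.
Proof.
move=> [hA _].
have r : (N < M)%N by [].
have := hA (Ordinal r); rewrite rowE mxE /=.
have -> : (N < n)%N = false by lia.
have -> : (N < n + n)%N = false by lia.
by [].
Qed.

Lemma sum_ge : (\sum_(k < N) ((n <= k)%N : nat))%N = n.
Proof.
suff H : forall K, (\sum_(k < K) ((n <= k)%N : nat))%N = (K - n)%N.
  rewrite H; lia.
elim=> [|K IH]; first by rewrite big_ord0.
rewrite big_ord_recr /= IH; case: leqP => h; lia.
Qed.

Lemma Sge (z : 'cV[R]_N) : (forall k : 'I_N, (n <= k)%N -> 1 <= z k 0) -> n%:R <= Sy z.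
Proof.
move=> H.
have -> : (n%:R : R) = \sum_(k < N) (n <= k)%N%:R by rewrite -natr_sum sum_ge.
apply: ler_sum => k _.
case: leqP => h; last by rewrite !mul0r.
by rewrite mul1r; apply: H.
Qed.

Lemma yopt (h : fixing N) (p : 'cV[R]_N) : node_feas Am bm h p ->
  (forall z, node_feas Am bm h z -> forall k : 'I_N, (n <= k)%N -> p k 0 <= z k 0) ->
  (forall z, node_feas Am bm h z -> objval cm z <= objval cm p) /\
  (forall z, node_feas Am bm h z -> objval cm p <= objval cm z ->
      forall k : 'I_N, (n <= k)%N -> z k 0 = p k 0).
Proof.
move=> hp H.
have D : forall z, node_feas Am bm h z ->
   Sy z - Sy p = \sum_(k < N) (n <= k)%N%:R * (z k 0 - p k 0) /\
   forall k : 'I_N, 0 <= (n <= k)%N%:R * (z k 0 - p k 0).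
  move=> z hz; split.
    by rewrite /Sy -sumrB; apply: eq_bigr => k _; ring.
  move=> k; case: leqP => hk; last by rewrite mul0r.
  by rewrite mul1r subr_ge0; apply: H.
split.
  move=> z hz; rewrite !objE lerN2 -subr_ge0.
  have [-> D2] := D z hz; exact: sumr_ge0.
move=> z hz; rewrite !objE lerN2 => hle k hk.
have [D1 D2] := D z hz.
have E : \sum_(k < N) (n <= k)%N%:R * (z k 0 - p k 0) = 0 :> R.
  apply/eqP; rewrite eq_le sumr_ge0 // andbT -D1 subr_le0 //.
have := @psumr_eq0P _ _ predT _ (fun k _ => D2 k) E k isT.
rewrite hk mul1r => /eqP; rewrite subr_eq0 => /eqP //.
Qed.

Lemma objvalC (u v : 'cV[R]_N) (t : R) :
  objval cm (t *: u + (1 - t) *: v) = t * objval cm u + (1 - t) * objval cm v.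
Proof.
rewrite /objval !mulr_sumr -big_split; apply: eq_bigr => k _; rewrite !mxE /=; ring.
Qed.

Lemma ext_lemma (h : fixing N) (p : 'cV[R]_N) : node_feas Am bm h p ->
  (forall z, node_feas Am bm h z -> objval cm z <= objval cm p) ->
  (forall z, node_feas Am bm h z -> objval cm p <= objval cm z ->
      forall k : 'I_N, p k 0 != 0 -> z k 0 = p k 0) ->
  lp_opt_extreme Am bm cm h p.
Proof.
move=> hp hopt heq; split => //; split => // u v t hu hv /andP [t0 t1] E.
have Ou := hopt u hu; have Ov := hopt v hv.
have Ep : objval cm p = t * objval cm u + (1 - t) * objval cm v by rewrite {1}E objvalC.
have Eu : objval cm p <= objval cm u.
  rewrite -subr_le0.
  have h1 : 0 <= t * (objval cm p - objval cm u) by apply: mulr_ge0; lra.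
  have h2 : 0 <= (1 - t) * (objval cm p - objval cm v) by apply: mulr_ge0; lra.
  have h3 : t * (objval cm p - objval cm u) + (1 - t) * (objval cm p - objval cm v) = 0.
    by rewrite Ep; ring.
  have h4 : t * (objval cm p - objval cm u) = 0 by lra.
  move: h4 => /eqP; rewrite mulf_eq0 (gt_eqF t0) /= subr_eq0 => /eqP ->; lra.
have Ev : objval cm p <= objval cm v.
  rewrite -subr_le0.
  have h1 : 0 <= t * (objval cm p - objval cm u) by apply: mulr_ge0; lra.
  have h2 : 0 <= (1 - t) * (objval cm p - objval cm v) by apply: mulr_ge0; lra.
  have h3 : t * (objval cm p - objval cm u) + (1 - t) * (objval cm p - objval cm v) = 0.
    by rewrite Ep; ring.
  have h4 : (1 - t) * (objval cm p - objval cm v) = 0 by lra.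
  move: h4 => /eqP; rewrite mulf_eq0 subr_eq0 (gt_eqF t1) /= subr_eq0 => /eqP ->; lra.
apply/matrixP => k l; rewrite (ord1 l).
have [pk0|pkn] := eqVneq (p k 0) 0.
  have Ek : p k 0 = t * u k 0 + (1 - t) * v k 0 by rewrite E !mxE.
  have [/andP[u0 _] _] : (0 <= u k 0 <= 1) /\ True by split => //; case: hu => _ [] //.
  have [/andP[v0 _] _] : (0 <= v k 0 <= 1) /\ True by split => //; case: hv => _ [] //.
  have a1 : 0 <= t * u k 0 by apply: mulr_ge0; lra.
  have a2 : 0 <= (1 - t) * v k 0 by apply: mulr_ge0; lra.
  have b1 : t * u k 0 = 0 by lra.
  have b2 : (1 - t) * v k 0 = 0 by lra.
  move: b1 b2 => /eqP; rewrite mulf_eq0 (gt_eqF t0) /= => /eqP ->.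
  move=> /eqP; rewrite mulf_eq0 subr_eq0 (gt_eqF t1) /= => /eqP -> //.
by rewrite (heq u hu Eu k pkn) (heq v hv Ev k pkn).
Qed.

Lemma pk_pair (a b : 'I_N) : (b : nat) = (n + a)%N -> pk b = a.
Proof. move=> hb; apply: val_inj => /=; lia. Qed.

Lemma sum_ind1 (o : 'I_N) : \sum_(k < N) (k == o :> nat)%:R = 1 :> R.
Proof.
rewrite (bigD1 o) //= eqxx big1 ?addr0 // => k /negPf Hk.
by rewrite (_ : (k == o :> nat) = false) // -Hk.
Qed.

Lemma no_int (g : fixing N) z : node_feas Am bm g z -> integral z -> False.
Proof.
move=> hz hi.
have h1 := feas_S hz.
have : n%:R <= Sy z.
  apply: Sge => k hk.
  have hb : (k : nat) = (n + pk k)%N by rewrite /= subnKC.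
  have [] := feas_block hb hz.
  by case: (hi (pk k)) => ->; lra.
lra.
Qed.

Definition pf (f : fixing N) : 'cV[R]_N := \col_(k < N)
  (if (k < n)%N then (if f k is Some s then (s:nat)%:R else 2^-1)
   else (f (pk k) != None)%:R).
Definition onlyx (f : fixing N) := forall j : 'I_N, f j != None -> (j < n)%N.
Definition Inv (f : fixing N) (k : nat) := onlyx f /\ Sy (pf f) <= k%:R.

Lemma pf_feas f k : Inv f k -> (k < n)%N -> node_feas Am bm f (pf f).
Proof.
move=> [ho hS] hk; apply: feas_of.
- move=> a b hb.
  have hbN := ltn_ord b.
  have ha : (a < n)%N by lia.
  have hb1 : (b < n)%N = false by lia.
  rewrite !mxE ha hb1 (pk_pair hb).
  by case: (f a) => [[]|] /=; lra.
- have : (k.+1)%:R <= n%:R :> R by rewrite ler_nat.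
  rewrite -addn1 natrD; lra.
- move=> j; rewrite mxE; case: (j < n)%N.
    by case: (f j) => [[]|] /=; lra.
  by case: (f (pk j) != None) => /=; lra.
- move=> j s hs.
  have hj : (j < n)%N by apply: ho; rewrite hs.
  by rewrite mxE hj hs.
Qed.

Lemma opt_char f k x : Inv f k -> (k < n)%N -> lp_opt_extreme Am bm cm f x ->
  forall j : 'I_N, (n <= j)%N -> x j 0 = pf f j 0.
Proof.
move=> hI hk [[hx _] hopt].
have hp := pf_feas hI hk.
have Hb : forall z, node_feas Am bm f z -> forall j : 'I_N, (n <= j)%N -> pf f j 0 <= z j 0.
  move=> z hz j hj.
  rewrite mxE.
  have -> : (j < n)%N = false by lia.
  case hf: (f (pk j)) => [s|] /=; last by case: hz => _ [] /(_ j) /andP [].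
  have hb : (j : nat) = (n + pk j)%N by rewrite /= subnKC.
  have [] := feas_block hb hz.
  case: hz => _ [_] /(_ _ _ hf) ->.
  by case: s {hf} => /=; lra.
have [_ Y] := yopt hp Hb.
by move=> j hj; apply: Y => //; apply: hopt.
Qed.

Lemma frac_branch f k x j : Inv f k -> (k < n)%N -> lp_opt_extreme Am bm cm f x ->
  fractional_at x j -> (j < n)%N /\ f j = None.
Proof.
move=> hI hk hx /andP [h0 h1].
have [hj|hj] := leqP n j.
  move: h0 h1; rewrite (opt_char hI hk hx hj) mxE.
  have -> : (j < n)%N = false by lia.
  by case: (f (pk j)) => [s|] /= h0' h1'; exfalso; lra.
split => //.
case hf: (f j) => [s|] //.
move: h0 h1; case: hx => [[[_ [_ /(_ _ _ hf) ->]]] _] _.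
by case: s {hf} => /= ? ?; exfalso; lra.
Qed.

Lemma Inv_step f k (j : 'I_N) (s : bool) : Inv f k -> (j < n)%N -> f j = None -> Inv (fix_var f j s) k.+1.
Proof.
move=> [ho hS] hj hf; split.
  move=> i; rewrite /fix_var; case: (i =P j) => [-> _ //|_]; exact: ho.
have hjN : (n + j < N)%N by lia.
have E : Sy (pf (fix_var f j s)) <= Sy (pf f) + 1.
  rewrite -(sum_ind1 (Ordinal hjN)) /Sy -big_split /=.
  apply: ler_sum => i _.
  rewrite !mxE.
  case: leqP => hi; last by rewrite !mul0r add0r ler0n.
  rewrite !mul1r /fix_var.
  case: (pk i =P j) => e /=.
    have -> : (nat_of_ord i == (n + j)%N) by rewrite -e /= subnKC.
    by case: (f (pk i)) => [?|] /=; lra.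
  by rewrite lerDl ler0n.
rewrite -addn1 natrD; lra.
Qed.

Lemma leaf_in (t : bbtree R N) x : Some x \in leaf_sols t -> x \in tree_sols t.
Proof.
elim: t => [o|y j t0 IH0 t1 IH1] /=.
  by rewrite inE => /eqP <-; rewrite inE.
by rewrite mem_cat inE mem_cat => /orP [/IH0 ->|/IH1 ->]; rewrite ?orbT.
Qed.

Lemma sols_feas (t : bbtree R N) : forall f, valid_tree Am bm cm f t ->
  forall x, x \in tree_sols t -> exists g, node_feas Am bm g x.
Proof.
elim: t => [[y|]|y j t0 IH0 t1 IH1] f /=.
- by move=> [[hy _] _] x; rewrite inE => /eqP ->; exists f.
- by [].
move=> [[[hy _] _] [h0 h1]] x; rewrite inE mem_cat => /orP [/eqP ->|/orP [H|H]].
- by exists f.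
- exact: IH0 h0 x H.
- exact: IH1 h1 x H.
Qed.

Lemma no_some_leaf (t : bbtree R N) : solves Am bm cm t ->
  forall x, Some x \in leaf_sols t -> False.
Proof.
move=> [hv hl] x hx.
case: (hl x hx) => [hi|[y hy [hiy _]]].
  have [g hg] := sols_feas hv (leaf_in hx); exact: no_int hg hi.
have [g hg] := sols_feas hv hy; exact: no_int hg hiy.
Qed.

Lemma lb (t : bbtree R N) : forall f k, Inv f k -> valid_tree Am bm cm f t ->
  fractional_branching t -> (forall x, Some x \in leaf_sols t -> False) ->
  (2 ^ (n - k).+1 - 1 <= tree_size t)%N.
Proof.
elim: t => [o|x j t0 IH0 t1 IH1] f k hI hv hfr hl.
  case: (leqP n k) => hk.
    have -> : (n - k = 0)%N by lia.
    by [].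
  exfalso.
  case: o hv hl {hfr} => [x|] hv hl.
    by apply: (hl x); rewrite inE.
  exact: hv _ (pf_feas hI hk).
case: (leqP n k) => hk.
  have -> : (n - k = 0)%N by lia.
  by rewrite /=.
move: hv hfr => [hx [hv0 hv1]] [hj [hf0 hf1]].
have [jn fj] := frac_branch hI hk hx hj.
have l0 : forall y, Some y \in leaf_sols t0 -> False.
  by move=> y hy; apply: (hl y); rewrite /= mem_cat hy.
have l1 : forall y, Some y \in leaf_sols t1 -> False.
  by move=> y hy; apply: (hl y); rewrite /= mem_cat hy orbT.
have H0 := IH0 _ _ (Inv_step false hI jn fj) hv0 hf0 l0.
have H1 := IH1 _ _ (Inv_step true hI jn fj) hv1 hf1 l1.
move: H0 H1 => /=.
have -> : (n - k = (n - k.+1).+1)%N by lia.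
set e := (n - k.+1)%N.
rewrite (expnS 2 e.+1).
have := expn_gt0 2 e.+1.
lia.
Qed.

Lemma strong_frac score (t : bbtree R N) : forall f,
  strong_branching Am bm cm score f t -> fractional_branching t.
Proof.
elim: t => [o|x j t0 IH0 t1 IH1] f //=.
move=> [hj [_ [h0 h1]]]; split => //; split; [exact: IH0 h0 | exact: IH1 h1].
Qed.

Lemma Inv_root : Inv (@root_fixing N) 0.
Proof.
split => // .
rewrite /Sy big1 // => k _; rewrite mxE.
case: leqP => h; last by rewrite mul0r.
by rewrite mul1r.
Qed.

Lemma part1 (t : bbtree R N) : solves Am bm cm t -> fractional_branching t ->
  (2 ^ n.+1 - 1 <= tree_size t)%N.
Proof.
move=> hs hfr.
have := lb Inv_root (proj1 hs) hfr (no_some_leaf hs).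
by rewrite subn0.
Qed.

Lemma xo_proof (i : 'I_n) : (i < N)%N. Proof. have := ltn_ord i; lia. Qed.
Lemma yo_proof (i : 'I_n) : (n + i < N)%N. Proof. have := ltn_ord i; lia. Qed.
Definition xo (i : 'I_n) : 'I_N := Ordinal (xo_proof i).
Definition yo (i : 'I_n) : 'I_N := Ordinal (yo_proof i).

Definition q (i : nat) : 'cV[R]_N := \col_(k < N)
  (if (k < n)%N then (if (k < i)%N then 0 else 2^-1) else ((k - n < i)%N)%:R).
Definition g (i : nat) : fixing N :=
  fun k => if (n <= k)%N && (k < n + i)%N then Some true else None.

Fixpoint build (s : seq 'I_n) : bbtree R N :=
  match s with
  | [::] => BLeaf None
  | i :: s' => BNode (q i) (yo i) (BNode (q i) (xo i) (BLeaf None) (BLeaf None)) (build s')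
  end.

Lemma build_size s : tree_size (build s) = (4 * size s + 1)%N.
Proof. elim: s => [|i s IH] //=; rewrite IH; lia. Qed.

Lemma build_leaves s x : Some x \in leaf_sols (build s) -> False.
Proof. elim: s => [|i s IH] //=; rewrite !mem_cat !inE //= => /IH. Qed.

Lemma cnt_lemma i : (i <= n)%N ->
  (\sum_(k < N) (((n <= k)%N && (k - n < i)%N) : nat))%N = i.
Proof.
move=> hi.
suff H : forall K, (\sum_(k < K) (((n <= k)%N && (k - n < i)%N) : nat))%N = minn (K - n) i.
  rewrite H; lia.
elim=> [|K IH]; first by rewrite big_ord0; lia.
rewrite big_ord_recr /= IH.
case: (leqP n K) => h1 /=; case: (ltnP (K - n) i) => h2 /=; lia.
Qed.

Lemma Sy_q i : (i <= n)%N -> Sy (q i) = i%:R.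
Proof.
move=> hi; have E := cnt_lemma hi; rewrite -[X in _ = X%:R]E natr_sum /Sy; apply: eq_bigr => k _.
rewrite mxE; case: (leqP n k) => h /=; first by rewrite mul1r.
by rewrite mul0r.
Qed.

Lemma qopt (h : fixing N) i : (i < n)%N ->
  (forall k : 'I_N, (n <= k)%N -> (k - n < i)%N -> h k = Some true) ->
  (forall k s, h k = Some s -> (n <= k)%N /\ (k - n < i)%N = s) ->
  lp_opt_extreme Am bm cm h (q i).
Proof.
move=> hi H1 H2.
have hp : node_feas Am bm h (q i).
  apply: feas_of.
  - move=> a b hb.
    have hbN := ltn_ord b.
    have ha : (a < n)%N by lia.
    have hb1 : (b < n)%N = false by lia.
    have hb2 : (b - n = a)%N by lia.
    rewrite !mxE ha hb1 hb2.
    by case: (a < i)%N => /=; lra.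
  - rewrite Sy_q; last exact: ltnW.
    by rewrite lerBrDr natr1 ler_nat.
  - move=> j; rewrite mxE; case: (j < n)%N.
      by case: (j < i)%N => /=; lra.
    by case: (j - n < i)%N => /=; lra.
  - move=> j s hs.
    have [hj hs2] := H2 _ _ hs.
    rewrite mxE.
    have -> : (j < n)%N = false by lia.
    by rewrite hs2.
have Hb : forall z, node_feas Am bm h z -> forall k : 'I_N, (n <= k)%N -> q i k 0 <= z k 0.
  move=> z hz k hk; rewrite mxE.
  have -> : (k < n)%N = false by lia.
  case hki: (k - n < i)%N => /=.
    by case: hz => _ [_] /(_ _ _ (H1 k hk hki)) ->.
  by case: hz => _ [] /(_ k) /andP [].
have [Y1 Y2] := yopt hp Hb.
apply: ext_lemma => // z hz hle k hk.
have [kn|kn] := leqP n k; first exact: Y2.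
have hkN : (n + k < N)%N by lia.
have hb : (Ordinal hkN : nat) = (n + k)%N by [].
have Ey := Y2 z hz hle (Ordinal hkN) (leq_addr _ _).
move: Ey; rewrite mxE /=.
have -> : (n + k < n)%N = false by lia.
rewrite addKn.
move: hk; rewrite mxE kn.
case: (k < i)%N => /=; first by rewrite eqxx.
move=> _ Ey.
have [] := feas_block hb hz.
rewrite Ey; lra.
Qed.

Lemma infeas_g i : (n <= i)%N -> lp_infeasible Am bm (g i).
Proof.
move=> hi z hz.
have h1 := feas_S hz.
have : n%:R <= Sy z.
  apply: Sge => k hk.
  have hg : g i k = Some true.
    rewrite /g hk /=.
    have hk2 := ltn_ord k; have -> : (k < n + i)%N by lia.
    by [].
  by case: hz => _ [_] /(_ _ _ hg) ->; rewrite ler1n.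
lra.
Qed.

Lemma valid_build s : forall i, map val s = iota i (n - i) ->
  valid_tree Am bm cm (g i) (build s).
Proof.
elim: s => [|o s IH] i /=.
  case E: (n - i)%N => [|e] // _.
  apply: infeas_g; move: E; lia.
case E: (n - i)%N => [|e] // [ho hs].
have hi : (i < n)%N by lia.
have oi : (o : nat) = i by [].
split.
  apply: qopt => //.
  - move=> k hk hki; rewrite /g hk /=; have -> : (k < n + i)%N by lia. by [].
  - move=> k s'; rewrite /g; case: ifP => // /andP [h1 h2] [<-]; split => //; lia.
split.
  split.
    apply: qopt => //.
    - move=> k hk hki; rewrite /fix_var.
      case: (k =P yo o) => [e'|_].
        by move: hki; rewrite e' /= oi addKn ltnn.
      rewrite /g hk /=; have -> : (k < n + i)%N by lia. by [].
    - move=> k s'; rewrite /fix_var.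
      case: (k =P yo o) => [-> [<-]|_].
        by rewrite /= oi addKn ltnn; split => //; lia.
      rewrite /g; case: ifP => // /andP [h1 h2] [<-]; split => //; lia.
  have Hx : forall s0, lp_infeasible Am bm (fix_var (fix_var (g i) (yo o) false) (xo o) s0).
    move=> s0 z hz.
    have hy : fix_var (fix_var (g i) (yo o) false) (xo o) s0 (yo o) = Some false.
      rewrite /fix_var.
      case: (yo o =P xo o) => [e'|_]; last by rewrite eqxx.
      by move: (congr1 val e') => /=; lia.
    have hx : fix_var (fix_var (g i) (yo o) false) (xo o) s0 (xo o) = Some s0.
      by rewrite /fix_var eqxx.
    have [] := feas_block (a := xo o) (b := yo o) erefl hz.
    case: hz => _ [_ Hf].
    rewrite (Hf _ _ hy) (Hf _ _ hx).
    by case: s0 {hx hy Hf} => /=; lra.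
  by split; apply: Hx.
have -> : fix_var (g i) (yo o) true = g i.+1.
  apply: functional_extensionality => k.
  rewrite /fix_var /g.
  case: (k =P yo o) => [->|ne] /=.
    rewrite oi; have -> : (n <= n + i)%N by lia. have -> : (n + i < n + i.+1)%N by lia. by [].
  have nk : (k : nat) != (n + i)%N.
    by apply/eqP => e'; apply: ne; apply: val_inj; rewrite /= e' oi.
  case: (leqP n k) => h1 //=.
  have -> : (k < n + i.+1)%N = (k < n + i)%N.
    move: nk => /eqP nk; apply/idP/idP => /= ?; lia.
  by [].
apply: IH.
rewrite hs; congr iota; lia.
Qed.

Lemma part3 : exists t : bbtree R N, solves Am bm cm t /\ (tree_size t <= 4 * n + 1)%N.
Proof.
exists (build (enum 'I_n)); split; last by rewrite build_size size_enum_ord.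
split; last by move=> x /build_leaves.
have -> : @root_fixing N = g 0.
  apply: functional_extensionality => k; rewrite /g /root_fixing addn0.
  by case: leqP => //= h; rewrite ltnNge h.
apply: valid_build.
by rewrite val_enum_ord subn0.
Qed.
End S.

Theorem corollary2p6 (R : realFieldType) (n : nat) :
  exists (m : nat) (A : 'M[R]_(m, n.*2)) (b : 'cV[R]_m) (c : 'cV[R]_(n.*2)),
    (forall t : bbtree R n.*2,
       solves A b c t -> fractional_branching t ->
       (2 ^ n.+1 - 1 <= tree_size t)%N) /\
    (forall (score : R -> option R -> option R -> R) (t : bbtree R n.*2),
       solves A b c t -> strong_branching A b c score (@root_fixing _) t ->
       (2 ^ n.+1 - 1 <= tree_size t)%N) /\
    (exists t : bbtree R n.*2, solves A b c t /\ (tree_size t <= 4 * n + 1)%N).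
Proof.
exists (n.*2).+1, (@Am R n), (@bm R n), (@cm R n).
split; [|split].
- move=> t hs hfr; exact: (@part1 R n t hs hfr).
- move=> score t hs hsb; exact: (@part1 R n t hs (strong_frac hsb)).
- exact: (@part3 R n).
Qed.
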